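(* Let $(\frac pq,\frac rs)$ be a Farey pair of order $n$ with $2\le q<s$. Put $d=\lfloor n/q\rfloor$, $\delta=\gcd(d,s)$, and define $s_1,d_1,r_1$ and $j_0\in\{0,\dots,\delta-1\}$ by $s=s_1\delta$, $d=d_1\delta$, $r=r_1\delta+j_0$; let $\hat r\in\{0,\dots,s_1-1\}$ and $l_0\in\{0,\dots,d_1-1\}$ be the nonnegative integers with $r_1=d_1\hat r-l_0s_1$. For $j\in\{0,\dots,\delta-1\}$ let $g_{1,j}(t)=t^{qd_1}-t^{qd_1-s_1}e^{2\pi ij/\delta}$ and $\hat g_{1,j}(t)=t^{qd_1}-t^{qd_1-s_1}e^{2\pi ij/(\delta d_1)}$. Then $e^{2\pi i r/s}$ is a root of $g_{1,j}$ if and only if $j=j_0$, and the root $\lambda$ of $\hat g_{1,j_0}$ satisfying $\lambda^{d_1}=e^{2\pi ir/s}$ is $\lambda=e^{\frac{2\pi i}{d_1}(\frac rs+l_0)}$.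
   Context: $\mathcal{F}_n=\{p/q:0\le p<q\le n,\ \gcd(p,q)=1\}$; a Farey pair of order $n$ is a pair $(\frac pq,\frac rs)$ of elements of $\mathcal F_n$ with $\frac pq<\frac rs$ and no element of $\mathcal F_n$ strictly between them. $g_{1,j},\hat g_{1,j}$ are the functions $g_{\alpha,j}(t)=(t^q-\beta)^{d_1}-\alpha^{d_1}t^{qd_1-s_1}e^{2\pi ij/\delta}$ and $\hat g_{\alpha,j}(t)=t^{qd_1}-\beta-\alpha t^{qd_1-s_1}e^{2\pi ij/(\delta d_1)}$ at $\alpha=1$, $\beta=0$, regarded as rational functions of $t$. *)

(* Defs.v *)
From HB Require Import structures.
From mathcomp Require Import all_boot all_order all_algebra.
From mathcomp Require Import reals trigo.
From mathcomp Require Import complex.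
Set Implicit Arguments. Unset Strict Implicit. Unset Printing Implicit Defensive.
Import Order.TTheory GRing.Theory Num.Theory.
Local Open Scope ring_scope.

Definition farey_elem (n p q : nat) : bool := [&& (p < q)%N, (q <= n)%N & coprime p q].

Definition farey_pair (n p q r s : nat) : Prop :=
  [/\ farey_elem n p q, farey_elem n r s, (p * s < r * q)%N &
      forall a b : nat, farey_elem n a b -> ~ ((p * b < a * q)%N /\ (a * s < r * b)%N)].

Definition e2pi {R : realType} (x : R) : R[i] :=
  Complex (cos (2 * pi * x)) (sin (2 * pi * x)).

(** g_{1,j}(t) = t^{q d1} - t^{q d1 - s1} e^{2 pi i j / delta}  (integer exponents:
    regarded as a rational function of t). *)
Definition g1 {R : realType} (q d1 s1 delta j : nat) (t : R[i]) : R[i] :=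
  t ^ ((q * d1)%N : int) - t ^ ((q * d1)%N%:Z - s1%:Z) * e2pi ((j%:R : R) / delta%:R).

Definition g1hat {R : realType} (q d1 s1 delta j : nat) (t : R[i]) : R[i] :=
  t ^ ((q * d1)%N : int) - t ^ ((q * d1)%N%:Z - s1%:Z)
     * e2pi ((j%:R : R) / (delta * d1)%N%:R).

(* Main.v *)
Require Import Defs.
From HB Require Import structures.
From mathcomp Require Import all_boot all_order all_algebra.
From mathcomp Require Import reals trigo.
From mathcomp Require Import complex.
From mathcomp Require Import ring lra zify.
Import Order.TTheory GRing.Theory Num.Theory.
Local Open Scope ring_scope.

Lemma gzero (F : fieldType) (t c : F) (a b : nat) : t != 0 ->
  (t ^ (a:int) - t ^ (a%:Z - b%:Z) * c = 0 <-> t ^+ b = c).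
Proof.
move=> t0.
have E : t ^ (a:int) = t ^ (a%:Z - b%:Z) * t ^+ b.
  by rewrite -[t ^+ b]/(t ^ (b:int)) -exprzDr ?unitfE // subrK.
have u0 : t ^ (a%:Z - b%:Z) != 0 by apply: expfz_neq0.
rewrite E -mulrBr; split.
  by move/eqP; rewrite mulf_eq0 (negbTE u0) subr_eq0 => /eqP.
by move=> ->; rewrite subrr mulr0.
Qed.

Lemma root_unique (F : fieldType) (x y : F) (a b : nat) : (0 < a)%N -> coprime a b ->
  y != 0 -> x ^+ a = y ^+ a -> x ^+ b = y ^+ b -> x = y.
Proof.
move=> a0 cab y0 ha hb.
case: (egcdnP b a0) => km kn E _.
move/eqP: cab E => -> E.
have : x ^+ (km * a) = y ^+ (km * a) by rewrite mulnC !exprM ha.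
rewrite E !exprD !expr1 mulnC !exprM hb => /mulfI; apply.
by rewrite expf_neq0 // expf_neq0.
Qed.

Lemma e2piD {R : realType} (x y : R) : e2pi (x + y) = e2pi x * e2pi y.
Proof.
rewrite /e2pi mulrDr cosD sinD /=; congr Complex; ring.
Qed.

Lemma e2pi0 {R : realType} : e2pi (0:R) = 1.
Proof. by rewrite /e2pi mulr0 cos0 sin0. Qed.

Lemma e2pi_nat {R : realType} (k : nat) : e2pi (k%:R : R) = 1.
Proof.
rewrite /e2pi.
have -> : 2 * pi * (k%:R : R) = 0 + (pi *+ 2) *+ k.
  by rewrite add0r -mulrnA -[pi *+ _]mulr_natl natrM mulrAC.
by rewrite (periodicn (@cosD2pi R)) (periodicn (@sinD2pi R)) cos0 sin0.
Qed.

Lemma e2piX {R : realType} (x : R) (n : nat) : e2pi x ^+ n = e2pi (n%:R * x).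
Proof.
elim: n => [|n IH]; first by rewrite mul0r e2pi0.
by rewrite exprS IH -e2piD -{1}(mul1r x) -mulrDl -natr1 addrC.
Qed.

Lemma e2pi_neq0 {R : realType} (x : R) : e2pi x != 0.
Proof.
apply/negP => /eqP H.
have : (cos (2 * pi * x)) ^+ 2 + (sin (2 * pi * x)) ^+ 2 = 1 by rewrite cos2Dsin2.
by move: H; rewrite /e2pi => -[-> ->]; rewrite expr0n /= addr0 => /esym/eqP; rewrite oner_eq0.
Qed.

Lemma e2pi_eq1 {R : realType} (x : R) : -1 < x < 1 -> e2pi x = 1 -> x = 0.
Proof.
move=> /andP[h1 h2] [hc hs].
have hy : sin (pi * x) = 0.
  have : cos (pi * x + pi * x) = 1 by rewrite -mulrDl -mulr2n -mulr_natl.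
  rewrite cosD -expr2 cos2sin2 expr2 => h.
  have : sin (pi * x) * sin (pi * x) = 0 by lra.
  by move/eqP; rewrite mulf_eq0 orbb => /eqP.
have pi0 := @pi_gt0 R.
case: (ltgtP x 0) => // hx.
- have : 0 < sin (- (pi * x)).
    apply: sin_gt0_pi; apply/andP; split.
      by rewrite oppr_gt0 pmulr_rlt0.
    by rewrite -mulrN -[X in _ < X]mulr1 ltr_pM2l // ltrNl.
  by rewrite sinN hy oppr0 ltxx.
- have : 0 < sin (pi * x).
    apply: sin_gt0_pi; apply/andP; split.
      by rewrite pmulr_rgt0.
    by rewrite -[X in _ < X]mulr1 ltr_pM2l.
  by rewrite hy ltxx.
Qed.

Theorem lemma4p5 (R : realType) (n p q r s : nat) (rhat l0 : nat) :
  farey_pair n p q r s -> (2 <= q)%N -> (q < s)%N ->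
  let d := (n %/ q)%N in
  let delta := gcdn d s in
  let s1 := (s %/ delta)%N in
  let d1 := (d %/ delta)%N in
  let r1 := (r %/ delta)%N in
  let j0 := (r %% delta)%N in
  (rhat < s1)%N -> (l0 < d1)%N ->
  (r1%:Z = (d1 * rhat)%N%:Z - (l0 * s1)%N%:Z) ->
  (forall j : nat, (j < delta)%N ->
     (g1 q d1 s1 delta j (e2pi ((r%:R : R) / s%:R)) = 0 <-> j = j0)) /\
  (forall lambda : R[i],
     (g1hat q d1 s1 delta j0 lambda = 0 /\ lambda ^+ d1 = e2pi ((r%:R : R) / s%:R))
     <-> lambda = e2pi (((r%:R : R) / s%:R + l0%:R) / d1%:R)).
Proof.
move=> _ hq2 hqs d delta s1 d1 r1 j0 hrh hl0 hr1.
have s0 : (0 < s)%N by apply: leq_ltn_trans hqs.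
have dl0 : (0 < delta)%N by rewrite /delta gcdn_gt0 s0 orbT.
have s10 : (0 < s1)%N by apply: leq_ltn_trans hrh.
have d10 : (0 < d1)%N by apply: leq_ltn_trans hl0.
have hs : s = (s1 * delta)%N by rewrite /s1 divnK // dvdn_gcdr.
have hd : d = (d1 * delta)%N by rewrite /d1 divnK // dvdn_gcdl.
have hr : r = (r1 * delta + j0)%N by rewrite /r1 /j0 -divn_eq.
have cop : coprime s1 d1.
  have : (gcdn d1 s1 * delta)%N = delta by rewrite muln_gcdl -hd -hs.
  rewrite -{2}[delta]mul1n => /eqP; rewrite eqn_mul2r eqn0Ngt dl0 /= => /eqP.
  by rewrite /coprime gcdnC => ->.
have hrn : (r1 + l0 * s1 = d1 * rhat)%N.
  by move: hr1; lia.
have dlR : (delta%:R : R) != 0 by rewrite pnatr_eq0 -lt0n.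
have s1R : (s1%:R : R) != 0 by rewrite pnatr_eq0 -lt0n.
have d1R : (d1%:R : R) != 0 by rewrite pnatr_eq0 -lt0n.
have sR : (s%:R : R) != 0 by rewrite pnatr_eq0 -lt0n.
have hsR : (s%:R : R) = s1%:R * delta%:R by rewrite hs natrM.
have hrR : (r%:R : R) = r1%:R * delta%:R + j0%:R by rewrite hr natrD natrM.
have hr1R : (r1%:R : R) = d1%:R * rhat%:R - l0%:R * s1%:R.
  by rewrite -!natrM -hrn natrD addrK.
split.
  move=> j hj.
  rewrite /g1 gzero ?e2pi_neq0 // e2piX.
  have -> : (s1%:R : R) * (r%:R / s%:R) = r1%:R + j0%:R / delta%:R.
    by rewrite hsR hrR; field; rewrite s1R dlR.
  rewrite e2piD e2pi_nat mul1r; split; last by move=> ->.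
  have -> : (j%:R : R) / delta%:R = (j%:R - j0%:R) / delta%:R + j0%:R / delta%:R.
    by field.
  rewrite e2piD -{1}[e2pi (j0%:R / _)]mul1r => /esym /mulIf.
  move=> /(_ (e2pi_neq0 _)) /e2pi_eq1.
  have hj0 : (j0 < delta)%N by apply: ltn_pmod.
  have dp : (0 : R) < delta%:R by rewrite ltr0n.
  have hjR : (j%:R : R) < delta%:R by rewrite ltr_nat.
  have hj0R : (j0%:R : R) < delta%:R by rewrite ltr_nat.
  have hjp : (0 : R) <= j%:R by apply: ler0n.
  have hj0p : (0 : R) <= j0%:R by apply: ler0n.
  rewrite ltr_pdivrMr // ltr_pdivlMr // mulN1r mul1r.
  have -> : (- delta%:R < j%:R - j0%:R :> R) = true by apply/idP; lra.
  have -> : (j%:R - j0%:R < delta%:R :> R) = true by apply/idP; lra.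
  move=> /(_ isT) /eqP; rewrite mulf_eq0 invr_eq0 (negbTE dlR) orbF subr_eq0 eqr_nat.
  by move/eqP.
set lam0 := e2pi (((r%:R : R) / s%:R + l0%:R) / d1%:R).
have P0 : lam0 ^+ d1 = e2pi ((r%:R : R) / s%:R).
  rewrite /lam0 e2piX.
  have -> : (d1%:R : R) * ((r%:R / s%:R + l0%:R) / d1%:R) = r%:R / s%:R + l0%:R.
    by field; rewrite ?d1R ?sR.
  by rewrite e2piD e2pi_nat mulr1.
have P1 : lam0 ^+ s1 = e2pi ((j0%:R : R) / (delta * d1)%N%:R).
  rewrite /lam0 e2piX.
  have -> : (s1%:R : R) * ((r%:R / s%:R + l0%:R) / d1%:R)
      = j0%:R / (delta * d1)%N%:R + rhat%:R.
    rewrite hsR hrR hr1R natrM; field; rewrite s1R dlR d1R //.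
  by rewrite e2piD e2pi_nat mulr1.
have l00 : lam0 != 0 by apply: e2pi_neq0.
move=> lam; split.
  move=> [hg hl].
  have lnz : lam != 0.
    apply/negP => /eqP h; move: hl; rewrite h expr0n.
    rewrite eqn0Ngt d10 /= => /esym /eqP; rewrite (negbTE (e2pi_neq0 _)).
    by [].
  move: hg; rewrite /g1hat gzero // -P1 => h1.
  apply: (@root_unique _ lam lam0 s1 d1 s10 cop l00 h1); by rewrite hl P0.
move=> ->; split => //.
by rewrite /g1hat gzero.
Qed.
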